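(* Let the spot price $\pi$ have CDF $F_{\pi}$ and monotonically decreasing density $f_{\pi}$ on $[\underline{\pi},\bar{\pi}]$ with $0\le\underline{\pi}<\bar{\pi}$, and let $t_k,t_e,t_s,t_r>0$ with $\frac{t_e}{2}<t_s<t_e$. Consider the problem (P3): minimize over $(q,p)$ $$\Phi_3(p,q)=q\,t_e\bar{\pi}+\frac{(1-q)t_e}{1-\frac{t_r}{t_k}(1-F_{\pi}(p))}\cdot\frac{\int_{\underline{\pi}}^{p}x f_{\pi}(x)\,dx}{F_{\pi}(p)}$$ subject to $q t_e\le t_s$, $\;\underline{\pi}\le p\le\bar{\pi}$, $\;0\le q\le 1$, $$\frac{(1-q)t_e}{1-\frac{t_r}{t_k}(1-F_{\pi}(p))}\cdot\frac{1}{F_{\pi}(p)}\le t_s,\qquad t_r<\frac{t_k}{2(1-F_{\pi}(p))}.$$ If $(q^*,p^* )$ is an optimal solution of (P3), then $F_{\pi}(p^* )\ge\frac12$.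
   Context: Model (persistent request): a user runs a fraction $q$ of a job (execution time $t_e$, deadline $t_s$) on an on-demand instance at price $\bar{\pi}$ and the rest on a spot instance with bid $p$, where an interrupted job resumes when the bid again exceeds the spot price, incurring a recovery time $t_r$ per resumption; spot prices in slots of length $t_k$ are i.i.d. with CDF $F_{\pi}$ and monotonically decreasing density $f_{\pi}$ on $[\underline{\pi},\bar{\pi}]$. *)

(* Defs.v *)
From Stdlib Require Import Reals.
From Coquelicot Require Import Coquelicot.
Open Scope R_scope.

Definition cdf (f : R -> R) (lo p : R) : R := RInt f lo p.

Definition partial_mean (f : R -> R) (lo p : R) : R := RInt (fun x => x * f x) lo p.

Definition Phi3 (f : R -> R) (lo hi tk te tr : R) (p q : R) : R :=
  q * te * hi
  + ((1 - q) * te / (1 - tr / tk * (1 - cdf f lo p)))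
    * (partial_mean f lo p / cdf f lo p).

(* Feasible set of (P3).  The condition F(p) > 0 is the implicit domain
   condition making the divisions by F(p) meaningful. *)
Definition feasible3 (f : R -> R) (lo hi tk te ts tr : R) (q p : R) : Prop :=
  q * te <= ts /\
  lo <= p <= hi /\
  0 <= q <= 1 /\
  0 < cdf f lo p /\
  (1 - q) * te / (1 - tr / tk * (1 - cdf f lo p)) * (1 / cdf f lo p) <= ts /\
  (* t_r < t_k / (2(1-F(p))), cleared of the denominator so that it is
     vacuous (+oo bound) when F(p) = 1, as in the paper *)
  2 * tr * (1 - cdf f lo p) < tk.

Definition optimal3 (f : R -> R) (lo hi tk te ts tr : R) (q p : R) : Prop :=
  feasible3 f lo hi tk te ts tr q p /\
  forall q' p', feasible3 f lo hi tk te ts tr q' p' ->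
    Phi3 f lo hi tk te tr p q <= Phi3 f lo hi tk te tr p' q'.

(* Main.v *)
Require Import Defs.
From Stdlib Require Import Reals Lra Lia.
From Coquelicot Require Import Coquelicot.
Open Scope R_scope.

Lemma prod_int (F : R -> R) lo hi M : lo < hi -> ex_RInt F lo hi ->
  (forall x, Rabs (F x) <= M) -> ex_RInt (fun x => x * F x) lo hi.
Proof.
  intros Hlh HF HM.
  set (d := fun n : nat => (hi - lo) / (INR n + 1)).
  assert (Hd : forall n, 0 < d n).
  { intro n. unfold d. apply Rdiv_lt_0_compat. lra. pose proof (pos_INR n). lra. }
  set (s := fun n x => lo + d n * IZR (Int_part ((x - lo) / d n))).
  set (G := fun n x => s n x * F x).
  assert (Hs : forall n x, 0 <= x - s n x <= d n).
  { intros n x. unfold s; cbv beta. destruct (base_Int_part ((x - lo) / d n)) as [H1 H2].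
    set (z := IZR (Int_part ((x - lo) / d n))) in *. pose proof (Hd n).
    set (y := (x - lo) / d n) in *.
    assert (E : x - (lo + d n * z) = d n * (y - z)) by (unfold y; field; lra).
    rewrite E. split.
    - apply Rmult_le_pos; lra.
    - rewrite <- (Rmult_1_r (d n)) at 2. apply Rmult_le_compat_l; lra. }
  assert (HG : forall n k, (k <= S n)%nat -> ex_RInt (G n) lo (lo + INR k * d n)).
  { intros n k. induction k as [|k IH]; intro Hk.
    - simpl. rewrite Rmult_0_l, Rplus_0_r. apply ex_RInt_point.
    - assert (Hkn : INR (S k) <= INR n + 1).
      { rewrite <- S_INR. apply le_INR. exact Hk. }
      pose proof (Hd n). pose proof (pos_INR k).
      set (dn := d n) in *.
      assert (Hend : lo + INR (S k) * dn <= hi).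
      { assert (E : hi = lo + (INR n + 1) * dn) by (unfold dn, d; field; pose proof (pos_INR n); lra).
        rewrite E. apply Rplus_le_compat_l. apply Rmult_le_compat_r; lra. }
      rewrite S_INR in *.
      set (kk := INR k) in *.
      assert (Hk0 : 0 <= kk * dn) by (apply Rmult_le_pos; lra).
      apply ex_RInt_Chasles with (lo + kk * dn).
      + apply IH. lia.
      + apply ex_RInt_ext with (fun x => scal (lo + dn * kk) (F x)).
        * intros x Hx. rewrite Rmin_left in Hx by lra. rewrite Rmax_right in Hx by lra.
          unfold G, s; cbv beta. fold dn. rewrite <- (Int_part_spec ((x - lo) / dn) (Z.of_nat k)).
          -- rewrite <- INR_IZR_INZ. fold kk. change (scal (lo + dn * kk) (F x)) with ((lo + dn * kk) * F x). reflexivity.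
          -- rewrite <- INR_IZR_INZ. fold kk.
             set (u := (x - lo) / dn).
             assert (Eu : x - lo = u * dn) by (unfold u; field; lra).
             assert (U1 : kk * dn < u * dn) by lra.
             assert (U2 : u * dn < (kk + 1) * dn) by lra.
             apply Rmult_lt_reg_r in U1; [|lra].
             apply Rmult_lt_reg_r in U2; [|lra].
             lra.
        * assert (HFi : ex_RInt F (lo + kk * dn) (lo + (kk + 1) * dn)).
          { apply (@ex_RInt_Chasles_2 R_CompleteNormedModule) with lo. lra.
            apply (@ex_RInt_Chasles_1 R_CompleteNormedModule) with hi. lra. exact HF. }
          exact (@ex_RInt_scal R_NormedModule F _ _ _ HFi). }
  assert (Hall : forall n, ex_RInt (G n) lo hi).
  { intro n. replace hi with (lo + INR (S n) * d n). apply HG. lia.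
    unfold d. rewrite S_INR. field. pose proof (pos_INR n). lra. }
  destruct (filterlim_RInt G lo hi eventually _ (fun x => x * F x) (fun n => RInt (G n) lo hi))
    as [If [_ HI]].
  - intro n. apply RInt_correct. apply Hall.
  - apply filterlim_locally. intro eps.
    destruct (archimed_cor1 (eps / (hi - lo) / (Rabs M + 1))) as [N [HN1 HN2]].
    { apply Rdiv_lt_0_compat. apply Rdiv_lt_0_compat. apply cond_pos. lra.
      pose proof (Rabs_pos M). lra. }
    exists N. intros n Hn t.
    change (Rabs (G n t - t * F t) < eps).
    unfold G. replace (s n t * F t - t * F t) with (- (t - s n t) * F t) by ring.
    rewrite Rabs_mult, Rabs_Ropp.
    destruct (Hs n t) as [Ha Hb].
    rewrite (Rabs_right (t - s n t)) by lra.
    pose proof (HM t). pose proof (Rabs_pos (F t)). pose proof (Rabs_pos M).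
    assert (HdN : d n * (Rabs M + 1) < eps).
    { unfold d.
      assert (INR N <= INR n) by (apply le_INR; lia).
      assert (0 < INR N) by (apply lt_0_INR; lia).
      assert (/ INR N < eps / (hi - lo) / (Rabs M + 1)) by lra.
      assert (/ (INR n + 1) < / INR N) by (apply Rinv_lt_contravar; [apply Rmult_lt_0_compat|]; lra).
      assert (E : (hi - lo) / (INR n + 1) * (Rabs M + 1) = (hi - lo) * (Rabs M + 1) * / (INR n + 1)) by (field; lra).
      rewrite E.
      assert (E2 : pos eps = (hi - lo) * (Rabs M + 1) * (eps / (hi - lo) / (Rabs M + 1))) by (field; lra).
      rewrite E2. apply Rmult_lt_compat_l. apply Rmult_lt_0_compat; lra. lra. }
    pose proof (Hd n).
    set (a := t - s n t) in *. set (b := Rabs (F t)) in *. set (dn := d n) in *.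
    apply Rle_lt_trans with (dn * (Rabs M + 1)); [|exact HdN].
    pose proof (Rle_abs M). apply Rmult_le_compat; lra.
  - exists If. exact HI.
Qed.

Lemma RInt_le_scal (g h : R -> R) a b c : a <= b -> ex_RInt g a b -> ex_RInt h a b ->
  (forall x, a < x < b -> g x <= c * h x) -> RInt g a b <= c * RInt h a b.
Proof.
  intros Hab Hg Hh Hle.
  assert (Hh' : ex_RInt (fun y => c * h y) a b) by exact (@ex_RInt_scal R_NormedModule h _ _ c Hh).
  apply Rle_trans with (RInt (fun y => c * h y) a b).
  - apply RInt_le; assumption.
  - right. exact (@RInt_scal R_CompleteNormedModule h a b c Hh).
Qed.

Theorem claim2 (f : R -> R) (lo hi tk te ts tr : R)
  (Hlo : 0 <= lo) (Hlohi : lo < hi)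
  (Hf_nonneg : forall x, lo <= x <= hi -> 0 <= f x)
  (Hf_decr : forall x y, lo <= x -> x <= y -> y <= hi -> f y <= f x)
  (Hf_int : ex_RInt f lo hi)
  (Hf_total : RInt f lo hi = 1)
  (Htk : 0 < tk) (Hte : 0 < te) (Hts : 0 < ts) (Htr : 0 < tr)
  (Hts1 : te / 2 < ts) (Hts2 : ts < te)
  (qs ps : R)
  (Hopt : optimal3 f lo hi tk te ts tr qs ps) :
  cdf f lo ps >= 1 / 2.
Proof.
  destruct Hopt as [Hfeas Hmin].
  destruct Hfeas as [Hq [Hp [Hq01 [HF0 [Hc Htrc]]]]].
  apply Rnot_lt_ge; intro HF.
  set (Fc := fun x => f (Rmax lo (Rmin hi x))).
  assert (HFc : ex_RInt Fc lo hi).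
  { apply ex_RInt_ext with f; [|exact Hf_int].
    intros x Hx. rewrite Rmin_left in Hx by lra. rewrite Rmax_right in Hx by lra.
    unfold Fc. rewrite Rmin_right by lra. rewrite Rmax_right by lra. reflexivity. }
  assert (HFcb : forall x, Rabs (Fc x) <= f lo).
  { intro x. unfold Fc.
    assert (lo <= Rmax lo (Rmin hi x) <= hi).
    { split. apply Rmax_l. apply Rmax_lub. lra. apply Rmin_l. }
    rewrite Rabs_right. apply Hf_decr; lra.
    apply Rle_ge, Hf_nonneg; lra. }
  assert (Hxf : ex_RInt (fun x => x * f x) lo hi).
  { apply ex_RInt_ext with (fun x => x * Fc x).
    - intros x Hx. rewrite Rmin_left in Hx by lra. rewrite Rmax_right in Hx by lra.
      unfold Fc. rewrite Rmin_right by lra. rewrite Rmax_right by lra. reflexivity.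
    - exact (prod_int Fc lo hi (f lo) Hlohi HFc HFcb). }
  destruct Hp as [Hp1 Hp2].
  assert (Hf1 : ex_RInt f lo ps) by (apply (@ex_RInt_Chasles_1 R_CompleteNormedModule) with hi; [lra|exact Hf_int]).
  assert (Hf2 : ex_RInt f ps hi) by (apply (@ex_RInt_Chasles_2 R_CompleteNormedModule) with lo; [lra|exact Hf_int]).
  assert (Hx1 : ex_RInt (fun x => x * f x) lo ps) by (apply (@ex_RInt_Chasles_1 R_CompleteNormedModule) with hi; [lra|exact Hxf]).
  assert (Hx2 : ex_RInt (fun x => x * f x) ps hi) by (apply (@ex_RInt_Chasles_2 R_CompleteNormedModule) with lo; [lra|exact Hxf]).
  assert (I1 : RInt f lo ps + RInt f ps hi = 1).
  { rewrite <- Hf_total. exact (@RInt_Chasles R_CompleteNormedModule f lo ps hi Hf1 Hf2). }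
  assert (I0 : RInt (fun x => x * f x) lo ps + RInt (fun x => x * f x) ps hi = RInt (fun x => x * f x) lo hi).
  { exact (@RInt_Chasles R_CompleteNormedModule _ lo ps hi Hx1 Hx2). }
  assert (I2 : RInt (fun x => x * f x) lo ps <= hi * RInt f lo ps).
  { apply RInt_le_scal; auto. intros x Hx. apply Rmult_le_compat_r. apply Hf_nonneg; lra. lra. }
  assert (I3 : RInt (fun x => x * f x) ps hi <= hi * RInt f ps hi).
  { apply RInt_le_scal; auto. intros x Hx. apply Rmult_le_compat_r. apply Hf_nonneg; lra. lra. }
  assert (Hfe : feasible3 f lo hi tk te ts tr (1 - ts / te) hi).
  { unfold feasible3, cdf. rewrite Hf_total.
    assert (E : (1 - ts / te) * te = te - ts) by (field; lra).
    assert (E2 : (1 - (1 - ts / te)) * te / (1 - tr / tk * (1 - 1)) * (1 / 1) = ts) by (field; lra).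
    rewrite E, E2.
    assert (0 < ts / te < 1).
    { split. apply Rdiv_lt_0_compat; lra.
      apply Rmult_lt_reg_r with te; [lra|]. unfold Rdiv. rewrite Rmult_assoc, Rinv_l; lra. }
    repeat split; try lra. }
  specialize (Hmin _ _ Hfe).
  unfold Phi3, cdf, partial_mean in Hmin, Hc, Htrc, HF, HF0.
  rewrite Hf_total in Hmin.
  set (Fp := RInt f lo ps) in *.
  set (PM := RInt (fun x => x * f x) lo ps) in *.
  set (P2 := RInt (fun x => x * f x) ps hi) in *.
  set (mu := RInt (fun x => x * f x) lo hi) in *.
  set (G2 := RInt f ps hi) in *.
  set (D := 1 - tr / tk * (1 - Fp)) in *.
  assert (HtD : 0 < tr / tk * (1 - Fp)).
  { apply Rmult_lt_0_compat. apply Rdiv_lt_0_compat; lra. lra. }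
  assert (HtD2 : tr / tk * (1 - Fp) < 1 / 2).
  { assert (E : tr / tk * (1 - Fp) = (2 * tr * (1 - Fp)) / tk / 2) by (field; lra).
    rewrite E. unfold Rdiv. apply Rmult_lt_compat_r. lra.
    apply Rmult_lt_reg_r with tk; [lra|]. rewrite Rmult_assoc, Rinv_l; lra. }
  assert (HD : 1 / 2 < D < 1) by (unfold D; lra).
  assert (Hqs : 0 < 1 - qs).
  { assert (qs * te < te) by lra. apply Rmult_lt_reg_r with te; lra. }
  set (a := (1 - qs) / (D * Fp)).
  assert (Ha : 0 < a) by (apply Rdiv_lt_0_compat; [lra| apply Rmult_lt_0_compat; lra]).
  assert (EPhi : qs * te * hi + (1 - qs) * te / D * (PM / Fp) = te * hi - a * te * (D * Fp * hi - PM))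
    by (unfold a; field; lra).
  assert (EPhi0 : (1 - ts / te) * te * hi + (1 - (1 - ts / te)) * te / (1 - tr / tk * (1 - 1)) * (mu / 1)
                  = te * hi - ts * (hi - mu)) by (field; lra).
  assert (Hb : a * te <= ts).
  { replace (a * te) with ((1 - qs) * te / D * (1 / Fp)) by (unfold a; field; lra). exact Hc. }
  rewrite EPhi, EPhi0 in Hmin.
  set (X := D * Fp * hi - PM) in *.
  set (b := a * te) in *.
  assert (Hb0 : 0 < b) by (unfold b; apply Rmult_lt_0_compat; lra).
  assert (HX : X < Fp * hi - PM).
  { unfold X. assert (0 < (1 - D) * (Fp * hi)).
    { apply Rmult_lt_0_compat. lra. apply Rmult_lt_0_compat; lra. }
    lra. }
  assert (Eh : hi * Fp + hi * G2 = hi) by (rewrite <- Rmult_plus_distr_l, I1; ring).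
  assert (Ec : Fp * hi = hi * Fp) by ring.
  assert (Hmu : Fp * hi - PM <= hi - mu) by lra.
  assert (Hpos : 0 <= Fp * hi - PM) by lra.
  destruct (Rle_lt_dec 0 X) as [HX0|HX0].
  - assert (b * X <= ts * X) by (apply Rmult_le_compat_r; lra).
    assert (ts * X < ts * (hi - mu)) by (apply Rmult_lt_compat_l; lra).
    lra.
  - assert (b * X < 0).
    { rewrite <- (Rmult_0_r b). apply Rmult_lt_compat_l; lra. }
    assert (0 <= ts * (hi - mu)) by (apply Rmult_le_pos; lra).
    lra.
Qed.
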